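(* Let $n\ge 2$, $X=\{0,1\}^n$, let $C$ be the family of cylinders in $X$, and let $\mu$ be the uniform distribution on $X$. Then every weak $\frac14$-net for $C$ over $\mu$ has size at least $\log_2 n$.
   Context: A set $c\subseteq\{0,1\}^n$ is a cylinder if there are $Y\subseteq[n]$ and $v\in\{0,1\}^Y$ with $c=\{u\in\{0,1\}^n : u|_Y=v\}$. A weak $\varepsilon$-net for $C$ over $\mu$ is a set $S\subseteq X$ meeting every $c\in C$ with $\mu(c)\ge\varepsilon$. *)

(* Defs.v *)
From mathcomp Require Import all_boot.
From Stdlib Require Import Reals.

Set Implicit Arguments. Unset Strict Implicit. Unset Printing Implicit Defensive.

Definition cube (n : nat) := {ffun 'I_n -> bool}.

(* c is a cylinder: there are Y ⊆ [n] and v ∈ {0,1}^Y with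
   c = {u | u|_Y = v}.  v is represented by a total function whose values
   outside Y are irrelevant. *)
Definition cylinder (n : nat) (c : {set cube n}) : Prop :=
  exists (Y : {set 'I_n}) (v : {ffun 'I_n -> bool}),
    c = [set u : cube n | [forall i in Y, u i == v i]].

Definition unif (n : nat) (A : {set cube n}) : R :=
  (INR #|A| / INR #|[set: cube n]|)%R.

Definition weak_net_cyl (n : nat) (eps : R) (S : {set cube n}) : Prop :=
  forall c : {set cube n}, cylinder c -> (eps <= unif c)%R ->
    [exists x, (x \in S) && (x \in c)].

Definition log2 (x : R) : R := (ln x / ln 2)%R.

(* Main.v *)
Require Import Defs.
From mathcomp Require Import all_boot.
From Stdlib Require Import Reals.
From mathcomp Require Import zify.
From Stdlib Require Import Rpower Lra.
Set Implicit Arguments. Unset Strict Implicit. Unset Printing Implicit Defensive.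

Definition flip (n : nat) (i : 'I_n) (u : cube n) : cube n :=
  [ffun k => if k == i then ~~ u k else u k].

Lemma flipK (n : nat) (i : 'I_n) : involutive (@flip n i).
Proof. by move=> u; apply/ffunP=> k; rewrite !ffunE; case: eqP => // _; rewrite negbK. Qed.

Definition c0 (n : nat) (i j : 'I_n) : {set cube n} :=
  [set u : cube n | [forall k in [set i; j], u k == [ffun k => k == j] k]].

Lemma c0P (n : nat) (i j : 'I_n) (u : cube n) : i != j ->
  (u \in c0 i j) = (~~ u i && u j).
Proof.
move=> ij; rewrite inE; apply/forall_inP/andP.
- move=> H; have := H i; have := H j; rewrite !inE !eqxx orbT /= !ffunE eqxx (negbTE ij).
  by move=> /(_ isT) /eqP -> /(_ isT) /eqP ->.
- case=> Hi Hj k; rewrite !inE ffunE => /orP [] /eqP ->; rewrite ?eqxx ?(negbTE ij).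
  + by rewrite (negbTE Hi).
  + by rewrite Hj.
Qed.

Lemma card_c0 (n : nat) (i j : 'I_n) : i != j ->
  #|[set: cube n]| <= 4 * #|c0 i j|.
Proof.
move=> ij.
have sub : [set: cube n] \subset
   ((c0 i j :|: flip i @: c0 i j) :|: (flip j @: c0 i j :|: (flip i \o flip j) @: c0 i j)).
  apply/subsetP=> u _.
  have fi : forall v : cube n, flip i v i = ~~ v i by move=> v; rewrite ffunE eqxx.
  have fj : forall v : cube n, flip j v j = ~~ v j by move=> v; rewrite ffunE eqxx.
  have fij : forall v : cube n, flip i v j = v j by move=> v; rewrite ffunE eq_sym (negbTE ij).
  have fji : forall v : cube n, flip j v i = v i by move=> v; rewrite ffunE (negbTE ij).
  rewrite !in_setU; case Ei: (u i); case Ej: (u j).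
  - apply/orP; left; apply/orP; right; apply/imsetP; exists (flip i u); last by rewrite flipK.
    by rewrite c0P // fi fij Ei Ej.
  - apply/orP; right; apply/orP; right; apply/imsetP; exists (flip j (flip i u)).
      by rewrite c0P // fji fi fj fij Ei Ej.
    by rewrite /= !flipK.
  - by rewrite c0P // Ei Ej.
  - apply/orP; right; apply/orP; left; apply/imsetP; exists (flip j u); last by rewrite flipK.
    by rewrite c0P // fj fji Ei Ej.
have inj1 : injective (@flip n i) by apply: (can_inj (flipK i)).
have inj2 : injective (@flip n j) by apply: (can_inj (flipK j)).
have inj3 : injective (flip i \o flip j) by apply: inj_comp.
apply: leq_trans (subset_leq_card sub) _.
rewrite !(leq_trans (leq_card_setU _ _)) //.
apply: leq_trans (leq_add (leq_card_setU _ _) (leq_card_setU _ _)) _.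
by rewrite !card_imset // !mulSn mul0n addn0 !addnA.
Qed.

Lemma INR_expn2 (k : nat) : INR (expn 2 k) = (2 ^ k)%R.
Proof.
elim: k => [|k IH]; first by rewrite expn0.
by rewrite expnS -multE mult_INR IH /=.
Qed.

Theorem claim1 (n : nat) (hn : 2 <= n) (S : {set cube n}) :
  weak_net_cyl (1 / 4)%R S -> (log2 (INR n) <= INR #|S|)%R.
Proof.
move=> Hnet.
have key : n <= expn 2 #|S|.
  pose p := fun i : 'I_n => [set x in S | x i].
  case: (boolP [exists i, exists j, (i != j) && (p i == p j)]).
  - move=> /existsP [i /existsP [j /andP [ij /eqP pij]]].
    have cyl : cylinder (c0 i j).
      by exists [set i; j], [ffun k => k == j].
    have meas : (1 / 4 <= unif (c0 i j))%R.
      rewrite /unif.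
      have H := card_c0 ij.
      have pos : (0 < INR #|[set: cube n]|)%R.
        apply: lt_0_INR; apply/ltP.
        by apply/card_gt0P; exists [ffun=> false]; rewrite inE.
      move/leP: H => /le_INR; rewrite -multE mult_INR /= => H.
      apply: (Rmult_le_reg_r (INR #|[set: cube n]|)); first exact: pos.
      move: pos H; set b := INR #|_|; set a := INR #|_| => pos H.
      replace (a / b * b)%R with a by (field; lra).
      lra.
    have := Hnet _ cyl meas => /existsP [x /andP [xS xc]].
    move: xc; rewrite c0P // => /andP [xi xj].
    have : (x \in p i) = (x \in p j) by rewrite pij.
    by rewrite !inE xS /= (negbTE xi) xj.
  - rewrite negb_exists => /forallP H.
    have injp : injective p.
      move=> i j pij; apply/eqP; apply: contraT => ij.
      have := H i; rewrite negb_exists => /forallP /(_ j).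
      by rewrite ij pij eqxx.
    have sub : p @: 'I_n \subset powerset S.
      apply/subsetP=> A /imsetP [i _ ->]; rewrite inE.
      by apply/subsetP=> x; rewrite inE => /andP [].
    have := subset_leq_card sub.
    by rewrite card_imset // card_ord card_powerset.
rewrite /log2.
have l2 : (0 < ln 2)%R by rewrite -ln_1; apply: ln_increasing; lra.
have npos : (0 < INR n)%R by apply: lt_0_INR; apply/ltP; apply: leq_trans hn.
have : (ln (INR n) <= INR #|S| * ln 2)%R.
  rewrite -ln_pow; last lra.
  rewrite -INR_expn2.
  move: key; rewrite leq_eqVlt => /orP [/eqP e | /ltP lt]; first by rewrite -e; lra.
  by apply/Rlt_le/ln_increasing => //; apply: lt_INR.
move=> H.
apply: (Rmult_le_reg_r (ln 2)); first exact: l2.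
replace (ln (INR n) / ln 2 * ln 2)%R with (ln (INR n)) by (field; lra).
lra.
Qed.
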